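(* Let $\bm{f}(\bm{y})=A\bm{y}+\bm{g}(\bm{y})$ with $A\in\mathbb{R}^{n\times n}$ and $\bm{g}:\mathbb{R}^n\to\mathbb{R}^n$ twice differentiable, fix $\hat{\bm{y}}^n\in\mathbb{R}^n$, and let $u\in(0,1]$ be a roundoff unit. For $\Delta t>0$ let $\hat{\bm{d}}_j\in\mathbb{R}^n$ satisfy $\|\hat{\bm{d}}_j\|_2\le C\Delta t$, set $\delta=\sqrt{u}/\Delta t$, and define $$\hat\Delta\bm{f}_j=\hat A\hat{\bm{d}}_j+\delta^{-1}\big(\hat{\bm{g}}(\hat{\bm{y}}^n+\delta\hat{\bm{d}}_j)-\bm{g}(\hat{\bm{y}}^n)\big),$$ where $\hat A\hat{\bm{d}}_j=(A+\Delta A_j)\hat{\bm{d}}_j$ with $\|\Delta A_j\|_2\le Cu\|A\|_2$, and $\hat{\bm{g}}$ is a low-precision evaluation of $\bm{g}$ satisfying $\|\hat{\bm{g}}(\bm{x})-\bm{g}(\bm{x})\|_2\le Cu$. Then $$\hat\Delta\bm{f}_j=\bm{f}(\hat{\bm{y}}^n+\hat{\bm{d}}_j)-\bm{f}(\hat{\bm{y}}^n)+O(\sqrt{u}\,\Delta t+\Delta t^2),$$ with the implied constant independent of $u$ and $\Delta t$.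
   Context: Here $C$ denotes generic positive constants depending only on $\bm{f}$ (not on $u$ or $\Delta t$). High-precision evaluations (such as $\bm{g}(\hat{\bm{y}}^n)$) are assumed exact; low-precision operations are modeled by the stated perturbations. *)

(* Defs.v *)
From HB Require Import structures.
From mathcomp Require Import all_boot all_order all_algebra.
From mathcomp Require Import all_classical all_reals all_analysis.
Set Implicit Arguments. Unset Strict Implicit. Unset Printing Implicit Defensive.
Import Order.TTheory GRing.Theory Num.Theory.
Import numFieldNormedType.Exports.
Local Open Scope classical_set_scope.
Local Open Scope ring_scope.

Definition norm2 (R : realType) (n : nat) (v : 'cV[R]_n) : R :=
  Num.sqrt (\sum_(i < n) (v i ord0) ^+ 2).

Definition opnorm2 (R : realType) (n : nat) (M : 'M[R]_n) : R :=
  sup [set norm2 (M *m x) | x in [set x : 'cV[R]_n | norm2 x <= 1]].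

(* g : R^n -> R^n is twice (Frechet) differentiable everywhere: g is
   differentiable, and the derivative x |-> Dg(x) is differentiable; in finite
   dimension the latter is written columnwise: x |-> Dg(x) v is differentiable
   for every direction v. *)
Definition twice_differentiable (R : realType) (n : nat)
  (g : 'cV[R]_n -> 'cV[R]_n) : Prop :=
  (forall x, differentiable g x) /\
  (forall v : 'cV[R]_n, forall x, differentiable (fun y => 'd g y v) x).

(* Main.v *)
Require Import Defs.
From HB Require Import structures.
From mathcomp Require Import all_boot all_order all_algebra.
From mathcomp Require Import all_classical all_reals all_analysis.
From mathcomp Require Import ring lra.
Import Order.TTheory GRing.Theory Num.Theory.
Import numFieldNormedType.Exports.
Local Open Scope classical_set_scope.
Local Open Scope ring_scope.

Set Implicit Arguments. Unset Strict Implicit.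


Section H.
Variable R : realType.

Lemma mx_entry_le m n (x : 'M[R]_(m,n)) i j : `|x i j| <= `|x|.
Proof.
rewrite -[`|x|]/(mx_norm x) mx_normrE.
by apply: (le_trans _ (le_bigmax _ _ (i, j))) => //=.
Qed.

Lemma mx_le m n (x : 'M[R]_(m,n)) M : 0 <= M -> (forall i j, `|x i j| <= M) -> `|x| <= M.
Proof.
move=> M0 H; rewrite -[`|x|]/(mx_norm x) mx_normrE.
by apply: bigmax_le => // -[i j] _; apply: H.
Qed.

Lemma tr_norm m n (x : 'M[R]_(m,n)) : `|x^T| = `|x|.
Proof.
apply/eqP; rewrite eq_le; apply/andP; split; apply: mx_le => // i j.
  by rewrite mxE mx_entry_le.
by have := @mx_entry_le _ _ x^T j i; rewrite mxE.
Qed.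

Lemma trmx_cont m n : continuous (@trmx R m n).
Proof.
move=> x; apply/(@cvgrPdist_lt _ _ _ (nbhs x)) => e e0; near=> z.
rewrite -linearB /= tr_norm; near: z.
by apply: cvgr_dist_lt.
Unshelve. all: by end_near. Qed.


Lemma norm2_ge0 n (v : 'cV[R]_n) : 0 <= norm2 v.
Proof. exact: sqrtr_ge0. Qed.

Lemma sum_sq_ge0 n (v : 'cV[R]_n) : 0 <= \sum_(i < n) (v i ord0) ^+ 2.
Proof. by apply: sumr_ge0 => i _; apply: sqr_ge0. Qed.

Lemma mx_le_norm2 n (v : 'cV[R]_n) : `|v| <= norm2 v.
Proof.
apply: mx_le; first exact: norm2_ge0.
move=> i j; rewrite (ord1 j) -sqrtr_sqr /norm2 ler_wsqrtr //.
rewrite (bigD1 i) //= lerDl; apply: sumr_ge0 => k _; exact: sqr_ge0.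
Qed.

Lemma norm2_le_mx n (v : 'cV[R]_n) : norm2 v <= n%:R * `|v|.
Proof.
rewrite /norm2 -(ger0_norm (_ : 0 <= n%:R * `|v|)); last first.
  by rewrite mulr_ge0.
rewrite -sqrtr_sqr ler_wsqrtr //.
apply: (le_trans (y := \sum_(i < n) `|v| ^+ 2)).
  apply: ler_sum => i _; rewrite -real_normK ?num_real //.
  by rewrite lerXn2r ?nnegrE // ?normr_ge0 // (@mx_entry_le _ _ v i ord0).
rewrite sumr_const card_ord exprMn -[X in X <= _]mulr_natl ler_wpM2r ?sqr_ge0 //.
case: n v => [|k] v; first by rewrite expr0n.
rewrite -natrX ler_nat expnS leq_pmulr // expn_gt0.
Qed.

Lemma norm2Z n c (v : 'cV[R]_n) : norm2 (c *: v) = `|c| * norm2 v.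
Proof.
rewrite /norm2 -sqrtr_sqr -sqrtrM ?sqr_ge0 //; congr Num.sqrt.
rewrite mulr_sumr; apply: eq_bigr => i _; by rewrite mxE exprMn.
Qed.

Lemma norm2_0 n : norm2 (0 : 'cV[R]_n) = 0.
Proof. by rewrite -(scale0r (0 : 'cV[R]_n)) norm2Z normr0 mul0r. Qed.


Lemma mulmx_norm n (M : 'M[R]_n) (x : 'cV[R]_n) : `|M *m x| <= n%:R * `|M| * `|x|.
Proof.
apply: mx_le => [|i j]; first by rewrite !mulr_ge0.
rewrite mxE (le_trans (ler_norm_sum _ _ _)) //.
apply: (le_trans (y := \sum_(k < n) `|M| * `|x|)).
  apply: ler_sum => k _; rewrite normrM ler_pM //.
    exact: mx_entry_le.
  exact: mx_entry_le.
by rewrite sumr_const card_ord -mulrA mulr_natl.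
Qed.

Definition opset n (M : 'M[R]_n) :=
  [set norm2 (M *m x) | x in [set x : 'cV[R]_n | norm2 x <= 1]].

Lemma opset_ub n (M : 'M[R]_n) : has_ubound (opset M).
Proof.
exists (n%:R * (n%:R * `|M|)) => _ [x /= hx <-].
apply: (le_trans (norm2_le_mx _)); rewrite ler_wpM2l //.
apply: (le_trans (mulmx_norm _ _)); rewrite -[X in _ <= X]mulr1 ler_wpM2l ?mulr_ge0 //.
exact: le_trans (mx_le_norm2 _) hx.
Qed.

Lemma opnorm_in n (M : 'M[R]_n) x : norm2 x <= 1 -> norm2 (M *m x) <= opnorm2 M.
Proof. by move=> hx; apply: (ub_le_sup (opset_ub M)); exists x. Qed.

Lemma opnorm_ge0 n (M : 'M[R]_n) : 0 <= opnorm2 M.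
Proof.
apply: le_trans (opnorm_in M (x := 0) _); first by rewrite norm2_ge0.
by rewrite norm2_0.
Qed.

Lemma norm2_eq0 n (x : 'cV[R]_n) : norm2 x = 0 -> x = 0.
Proof.
move=> h; apply: mx_norm_eq0; apply/eqP; rewrite eq_le; apply/andP; split; last exact: (normr_ge0 x).
by rewrite -h mx_le_norm2.
Qed.

Lemma opnorm_bound n (M : 'M[R]_n) x : norm2 (M *m x) <= opnorm2 M * norm2 x.
Proof.
have [/norm2_eq0 ->|nz] := eqVneq (norm2 x) 0.
  by rewrite mulmx0 !norm2_0 mulr0.
have xp : 0 < norm2 x by rewrite lt_def nz norm2_ge0.
have := opnorm_in M (x := (norm2 x)^-1 *: x).
rewrite norm2Z -scalemxAr norm2Z ger0_norm ?invr_ge0 ?norm2_ge0 // mulVf //.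
move=> /(_ (lexx _)); rewrite ler_pdivrMl // mulrC //.
Qed.

End H.


Section H2.
Variable R : realType.

Lemma diff_lip (V W : normedModType R) (F : V -> W) x : differentiable F x ->
  exists2 c, 0 < c & \forall k \near 0, `|F (x + k) - F x| <= c * `|k|.
Proof.
move=> df.
have [c c0 hc] := linear_lipschitz (diff_continuous df).
have /eqaddoP ho := diff_locally df.
have h1 := ho _ ltr01.
exists (c + 1); first by rewrite addr_gt0.
near=> k.
have : `|F (k + x) - (F x + 'd F x k)| <= 1 * `|k| by near: k; exact: h1.
rewrite mul1r [k + x]addrC => hk.
have -> : F (x + k) - F x = (F (x + k) - (F x + 'd F x k)) + 'd F x k.
  by rewrite opprD addrA subrK.
rewrite (le_trans (ler_normD _ _)) // mulrDl mul1r addrC lerD //.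
Unshelve. all: by end_near. Qed.


Lemma lin_delta n (f : {linear 'cV[R]_n -> 'cV[R]_n}) v :
  f v = \sum_i \sum_j v i j *: f (delta_mx i j).
Proof.
rewrite {1}(matrix_sum_delta v) linear_sum; apply: eq_bigr => i _.
by rewrite linear_sum; apply: eq_bigr => j _; rewrite linearZ.
Qed.

Lemma lin_bound n (f1 f2 : {linear 'cV[R]_n -> 'cV[R]_n}) (c : 'I_n * 'I_1 -> R) a v :
  0 <= a -> (forall i j, `|f1 (delta_mx i j) - f2 (delta_mx i j)| <= c (i, j) * a) ->
  `|f1 v - f2 v| <= (\sum_i \sum_j c (i, j)) * a * `|v|.
Proof.
move=> a0 hk.
have E : f1 v - f2 v = \sum_i \sum_j v i j *: (f1 (delta_mx i j) - f2 (delta_mx i j)).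
  rewrite (lin_delta f1) (lin_delta f2) -sumrB.
  apply: eq_bigr => i _; rewrite -sumrB; apply: eq_bigr => j _.
  by rewrite scalerBr.
rewrite E (le_trans (ler_norm_sum _ _ _)) //.
rewrite mulr_suml mulr_suml; apply: ler_sum => i _.
rewrite (le_trans (ler_norm_sum _ _ _)) //.
rewrite mulr_suml mulr_suml; apply: ler_sum => j _.
rewrite normrZ mulrC ler_pM //.
exact: mx_entry_le.
Qed.

Lemma dlip n (g : 'cV[R]_n -> 'cV[R]_n) yn :
  (forall v x, differentiable (fun y => 'd g y v) x) ->
  exists2 r, 0 < r & exists2 L, 0 <= L &
    forall k v, `|k| < r -> `|'d g (yn + k) v - 'd g yn v| <= L * `|k| * `|v|.
Proof.
move=> hd.
have H' : forall p : 'I_n * 'I_1, exists c, 0 < c /\ \forall k \near 0,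
    `|'d g (yn + k) (delta_mx p.1 p.2) - 'd g yn (delta_mx p.1 p.2)| <= c * `|k|.
  move=> p; have [c c0 h] := diff_lip (hd (delta_mx p.1 p.2) yn).
  by exists c; split.
have [c hc] := choice H'.
have Hall : \forall k \near 0, forall p : 'I_n * 'I_1,
    `|'d g (yn + k) (delta_mx p.1 p.2) - 'd g yn (delta_mx p.1 p.2)| <= c p * `|k|.
  near=> k => p; move: p; near: k.
  apply: filter_forall => p; exact: (hc p).2.
have [r r0 hr] := (nbhs_norm0P (P := fun k : 'cV[R]_n => forall p : 'I_n * 'I_1, `|'d g (yn + k) (delta_mx p.1 p.2) - 'd g yn (delta_mx p.1 p.2)| <= c p * `|k|)).1 Hall.
exists r => //.
exists (\sum_i \sum_j c (i, j)).
  by apply: sumr_ge0 => i _; apply: sumr_ge0 => j _; exact: ltW (hc _).1.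
move=> k v kr.
have hk := hr k kr.
apply: (lin_bound (f1 := 'd g (yn + k)) (f2 := 'd g yn)); first exact: normr_ge0.
move=> i j.
exact: (hk (i, j)).
Unshelve. all: by end_near. Qed.

End H2.


Section H4.
Variable R : realType.

Lemma line_is_diff (V : normedModType R) (y h : V) (t : R) :
  is_diff t (fun s : R => y + s *: h) (fun s => s *: h).
Proof.
have H : is_diff t (cst y + ( *:%R^~ h)) (0 + ( *:%R^~ h)) by exact: is_diffD.
have E1 : (cst y + ( *:%R^~ h)) = (fun s : R => y + s *: h) by [].
have E2 : (0 + ( *:%R^~ h)) = (fun s : R => s *: h) by rewrite add0r.
by move: H; rewrite E2 E1.
Qed.

Lemma line_diff (V W : normedModType R) (g : V -> W) (y h : V) t :
  differentiable g (y + t *: h) ->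
  differentiable (fun s : R => g (y + s *: h)) t /\
  'd (fun s : R => g (y + s *: h)) t 1 = 'd g (y + t *: h) h.
Proof.
move=> dg.
have dl := line_is_diff y h t.
have E : (fun s : R => g (y + s *: h)) = g \o (fun s : R => y + s *: h) by [].
rewrite E; split; first exact: differentiable_comp.
by rewrite diff_comp //= diff_val scale1r.
Qed.


Lemma coord_derive m n (f : R -> 'M[R]_(m, n)) t i j :
  differentiable f t -> is_derive t 1 (fun s => f s i j) ('d f t 1 i j).
Proof.
move=> df.
have @P : {linear 'M[R]_(m, n) -> R}.
  by exists (fun N : 'M[R]_(_, _) => N i j); do 2![eexists]; do ?[constructor];
     rewrite ?mxE// => ? *; rewrite ?mxE//; move=> ?; rewrite !mxE.
have Pc : continuous P := @coord_continuous R m n i j.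
have dP x : differentiable P x := linear_differentiable _ Pc.
have E : (fun s => f s i j) = P \o f by [].
rewrite E; apply: DeriveDef.
  by apply: diff_derivable; exact: differentiable_comp.
rewrite deriveE; last exact: differentiable_comp.
by rewrite diff_comp // diff_lin.
Qed.


Lemma scalel_diff (W : normedModType R) (w : W) (t : R) :
  'd (fun s : R => s *: w) t = (fun s => s *: w) :> (R -> W).
Proof. have H := is_diff_scalel t w. exact: diff_val. Qed.

Lemma taylor_local n (g : 'cV[R]_n -> 'cV[R]_n) yn : twice_differentiable g ->
  exists2 r, 0 < r & exists2 L, 0 <= L & forall h, `|h| < r ->
    `|g (yn + h) - g yn - 'd g yn h| <= L * `|h| ^+ 2.
Proof.
move=> [dg d2g].
have [r r0 [L L0 hl]] := dlip yn d2g.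
exists r => //; exists L => // h hr.
apply: mx_le; first by rewrite mulr_ge0 // sqr_ge0.
move=> i j.
pose psi := fun s : R => g (yn + s *: h) - s *: 'd g yn h.
have dpsi t : differentiable psi t /\
    'd psi t 1 = 'd g (yn + t *: h) h - 'd g yn h.
  have [d1 e1] := line_diff (dg (yn + t *: h)).
  have d2 : differentiable (fun s : R => s *: 'd g yn h) t by [].
  have e2 : 'd (fun s : R => s *: 'd g yn h) t 1 = 'd g yn h.
    have E := scalel_diff ('d g yn h) t.
    have E1 := congr1 (fun F => F 1) E.
    apply: eq_trans E1 _.
    exact: scale1r.
  have D := diffB d1 d2.
  split; first exact: (differentiableB d1 d2).
  have D1 := congr1 (fun F => F 1) D.
  apply: eq_trans D1 _ => /=.
  exact: (f_equal2 (fun a b => a - b) e1 e2).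
have der (x : R) : is_derive x (1 : R) (fun s : R => psi s i j : R) ('d psi x 1 i j).
  exact: coord_derive (dpsi x).1.
have cont : {within `[0, 1], continuous (fun s => psi s i j)}.
  apply: derivable_within_continuous => x _.
  exact: (@ex_derive _ _ _ _ _ _ _ (der x)).
have [c c01 hc] := MVT_segment ler01 (fun x _ => der x) cont.
have E : (g (yn + h) - g yn - 'd g yn h) i j = psi 1 i j - psi 0 i j.
  rewrite /psi !mxE scale1r scale0r addr0 mul1r mul0r subr0.
  by rewrite addrAC.
have E2 : 'd psi c 1 i j = ('d g (yn + c *: h) h - 'd g yn h) i j.
  exact: (congr1 (fun M : 'M[R]_(n, 1) => M i j) (dpsi c).2).
have ch : `|c *: h| <= `|h|.
  rewrite normrZ ler_piMl // ?normr_ge0 //.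
  by rewrite ger0_norm ?(itvP c01).
have B := hl _ h (le_lt_trans ch hr).
rewrite E hc subr0 mulr1 E2.
apply: le_trans (mx_entry_le _ i j) _.
apply: le_trans B _.
by rewrite expr2 mulrA ler_wpM2r // ler_wpM2l.
Qed.


Lemma Rf_cont n (g : 'cV[R]_n -> 'cV[R]_n) (yn : 'cV[R]_n) : (forall x, differentiable g x) ->
  continuous (fun h : 'cV[R]_n => g (yn + h) - g yn - 'd g yn h).
Proof.
move=> dg x.
have s1 : {for x, continuous (fun h : 'cV[R]_n => yn + h)}.
  have := continuousD (@cst_continuous _ _ yn x) (@cvg_id _ (nbhs x)).
  exact.
have c1 : {for x, continuous (fun h => g (yn + h))}.
  exact: (continuous_comp s1 (differentiable_continuous (dg (yn + x)))).
have c2 : {for x, continuous (fun _ : 'cV[R]_n => g yn)} by exact: (@cst_continuous _ _ (g yn) x).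
have c3 : {for x, continuous ('d g yn)} by exact: diff_continuous.
exact: continuousB (continuousB c1 c2) c3.
Qed.


Lemma cont_ball_bound n (F : 'cV[R]_n -> 'cV[R]_n) C : 0 < C -> continuous F ->
  exists M, forall h, `|h| <= C -> `|F h| <= M.
Proof.
move=> C0 Fc.
pose B := [set v : 'rV[R]_n | `|v| <= C].
have Bb : [bounded x | x in B].
  rewrite /bounded_near; near=> M => v /= hv.
  apply: le_trans hv _; near: M; apply: nbhs_pinfty_ge; exact: num_real.
have Bc : closed B.
  have -> : B = closed_ball 0 C.
    rewrite closed_ballE //; apply/seteqP; split => v /=;
    by rewrite /closed_ball_ /= sub0r normrN.
  exact: closed_ball_closed.
have Bk := bounded_closed_compact Bb Bc.
have FTc : continuous (F \o trmx).
  move=> x; exact: (continuous_comp (@trmx_cont _ _ _ x) (Fc _)).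
have Gk := continuous_compact (continuous_subspaceT FTc) Bk.
case: (compact_bounded Gk) => M0 [_ hM].
exists (M0 + 1) => h hh.
have H1 : [set (F \o trmx) x | x in B] (F h).
  exists h^T; first by rewrite /B /= tr_norm.
  by rewrite /= trmxK.
have lt1 : M0 < M0 + 1 by rewrite ltrDl.
exact: (hM (M0 + 1) lt1 (F h) H1).
Unshelve. all: by end_near. Qed.


Lemma taylor_global n (g : 'cV[R]_n -> 'cV[R]_n) (yn : 'cV[R]_n) C :
  twice_differentiable g -> 0 < C ->
  exists2 L, 0 <= L & forall h, `|h| <= C ->
    `|g (yn + h) - g yn - 'd g yn h| <= L * `|h| ^+ 2.
Proof.
move=> tg C0.
have [r r0 [L1 L10 hl]] := taylor_local yn tg.
have [M hM] := cont_ball_bound C0 (@Rf_cont _ g yn tg.1).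
have r2 : 0 < r ^+ 2 by rewrite exprn_gt0.
exists (L1 + `|M| / r ^+ 2); first by rewrite addr_ge0 // divr_ge0 ?sqr_ge0.
move=> h hC; case: (ltP `|h| r) => hr.
  apply: le_trans (hl h hr) _.
  by rewrite ler_wpM2r ?sqr_ge0 // lerDl divr_ge0 ?sqr_ge0.
apply: le_trans (hM h hC) _.
apply: le_trans (ler_norm M) _.
apply: (@le_trans _ _ (`|M| / r ^+ 2 * `|h| ^+ 2)); last first.
  by rewrite ler_wpM2r ?sqr_ge0 // lerDr.
rewrite -[X in X <= _](mulfK (lt0r_neq0 r2)) mulrAC ler_wpM2l ?divr_ge0 //.
  exact: sqr_ge0.
by rewrite !expr2 ler_pM // ltW.
Qed.

End H4.

Unset Implicit Arguments. Set Strict Implicit.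

Theorem lemmaA1 (R : realType) (n : nat) (A : 'M[R]_n)
  (g : 'cV[R]_n -> 'cV[R]_n) (yn : 'cV[R]_n) (C : R) :
  twice_differentiable g ->
  0 < C ->
  let f := fun y : 'cV[R]_n => A *m y + g y in
  exists K : R, exists T : R, 0 < T /\
    forall (u dt : R) (d : 'cV[R]_n) (dA : 'M[R]_n)
           (ghat : 'cV[R]_n -> 'cV[R]_n),
      0 < u -> u <= 1 -> 0 < dt -> dt <= T ->
      norm2 d <= C * dt ->
      opnorm2 dA <= C * u * opnorm2 A ->
      (forall x, norm2 (ghat x - g x) <= C * u) ->
      let delta := Num.sqrt u / dt in
      let Df := (A + dA) *m d + delta^-1 *: (ghat (yn + delta *: d) - g yn) in
      norm2 (Df - (f (yn + d) - f yn)) <= K * (Num.sqrt u * dt + dt ^+ 2).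
Proof.
move=> tg C0 f.
have [L L0 hT] := taylor_global yn tg C0.
set oA := opnorm2 A.
have oA0 : 0 <= oA := opnorm_ge0 A.
exists (n%:R * (C ^+ 2 * oA + C + L * C ^+ 2)), 1; split => //.
move=> u dt d dA ghat u0 u1 dt0 dt1 hd hdA hg.
cbv zeta.
set delta := Num.sqrt u / dt.
set Df := (A + dA) *m d + delta^-1 *: (ghat (yn + delta *: d) - g yn).
set s := Num.sqrt u.
have s0 : 0 < s by rewrite sqrtr_gt0.
have ss : s * s = u by rewrite -expr2 sqr_sqrtr // ltW.
have s1 : s <= 1 by rewrite -sqrtr1 ler_wsqrtr.
have us : u <= s by rewrite -ss -[X in _ <= X](mulr1 s) ler_wpM2l // ltW.
have de0 : 0 < delta by rewrite /delta divr_gt0.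
have nd : `|d| <= C * dt := le_trans (mx_le_norm2 d) hd.
have nd0 : 0 <= `|d| := normr_ge0 d.
have ndC : `|d| <= C.
  by apply: le_trans nd _; rewrite -[X in _ <= X]mulr1 ler_wpM2l // ltW.
have ddt : delta * dt = s by rewrite /delta divfK // gt_eqF.
have nδd : `|delta *: d| <= C.
  rewrite normrZ gtr0_norm //.
  apply: (@le_trans _ _ (delta * (C * dt))); first by rewrite ler_wpM2l // ltW.
  by rewrite mulrCA ddt -[X in _ <= X]mulr1 ler_wpM2l // ltW.
set R1 := g (yn + delta *: d) - g yn - 'd g yn (delta *: d).
set R2 := g (yn + d) - g yn - 'd g yn d.
have E : Df - (f (yn + d) - f yn) = dA *m d +
    delta^-1 *: (ghat (yn + delta *: d) - g (yn + delta *: d)) + delta^-1 *: R1 - R2.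
  have lD : 'd g yn (delta *: d) = delta *: 'd g yn d by rewrite linearZ.
  rewrite /Df /f /R1 /R2 lD mulmxDl mulmxDr.
  move: (A *m d) (dA *m d) (A *m yn) (g yn) (g (yn + d)) (g (yn + delta *: d))
    (ghat (yn + delta *: d)) ('d g yn d) => a e ay G0 G1 G2 H Dd.
  apply/matrixP => i j; rewrite !mxE.
  by field; rewrite gt_eqF.
have di0 : 0 <= delta^-1 by rewrite invr_ge0 ltW.
have B1 : `|dA *m d| <= C * u * oA * (C * dt).
  apply: le_trans (mx_le_norm2 _) _.
  apply: le_trans (opnorm_bound dA d) _.
  by apply: ler_pM => //; [exact: opnorm_ge0 | exact: norm2_ge0].
have B2 : `|delta^-1 *: (ghat (yn + delta *: d) - g (yn + delta *: d))| <=
    delta^-1 * (C * u).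
  apply: le_trans (mx_le_norm2 _) _.
  by rewrite norm2Z ger0_norm // ler_wpM2l.
have B3 : `|delta^-1 *: R1| <= delta^-1 * (L * (delta * (C * dt)) ^+ 2).
  rewrite normrZ ger0_norm // ler_wpM2l //.
  apply: le_trans (hT _ nδd) _.
  have q : `|delta *: d| <= delta * (C * dt).
    by rewrite normrZ gtr0_norm // ler_wpM2l // ltW.
  by rewrite ler_wpM2l // !expr2 ler_pM.
have B4 : `|R2| <= L * (C * dt) ^+ 2.
  apply: le_trans (hT _ ndC) _.
  have p2 : 0 <= C * dt by rewrite mulr_ge0 // ltW.
  by rewrite ler_wpM2l // !expr2 ler_pM.
rewrite E.
apply: le_trans (norm2_le_mx _) _.
rewrite -mulrA ler_wpM2l //.
apply: le_trans (ler_normB _ _) _.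
apply: le_trans (lerD (le_trans (ler_normD _ _) (lerD (le_trans (ler_normD _ _) (lerD B1 B2)) B3)) B4) _.
have dne : dt != 0 by rewrite gt_eqF.
have sne : s != 0 by rewrite gt_eqF.
have e2 : delta^-1 * (C * u) = C * s * dt.
  by rewrite /delta -/s -ss; field; rewrite sne dne.
have e3 : delta^-1 * (L * (delta * (C * dt)) ^+ 2) = L * C ^+ 2 * s * dt.
  by rewrite /delta -/s; field; rewrite sne dne.
rewrite e2 e3.
have h1 : 0 <= (s - u) * (C ^+ 2 * oA * dt).
  by rewrite mulr_ge0 ?subr_ge0 // !mulr_ge0 ?sqr_ge0 // ltW.
have h2 : 0 <= (C ^+ 2 * oA + C) * dt ^+ 2.
  by rewrite mulr_ge0 ?sqr_ge0 // addr_ge0 ?mulr_ge0 ?sqr_ge0 // ltW.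
have h3 : 0 <= L * C ^+ 2 * s * dt by rewrite !mulr_ge0 ?sqr_ge0 // ltW.
nra.
Qed.
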